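(* Let $\ell\ge1$ and let $G$ be a finite subgraph of the $\mathbb{Z}^\ell$ lattice. Then $\tilde{H}_k(\operatorname{ind}(G);\mathbf{k})=0$ for all $k<\frac{|V(G)|}{2\ell+1}-1$.
   Context: $\mathbf{k}$ is a fixed field. The $\mathbb{Z}^\ell$ lattice is the infinite graph whose vertices are the integer points of $\mathbb{R}^\ell$, two being adjacent when at Euclidean distance $1$. $\operatorname{ind}(G)$ is the simplicial complex on $V(G)$ whose faces are the independent sets of $G$, and $\tilde H_k$ is reduced simplicial homology with coefficients in $\mathbf{k}$. *)

(* Defs.v *)
From HB Require Import structures.
From mathcomp Require Import all_boot all_order all_algebra.
Set Implicit Arguments. Unset Strict Implicit. Unset Printing Implicit Defensive.
Import Order.TTheory GRing.Theory Num.Theory.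
Local Open Scope ring_scope.

(* Two integer points of Z^l are adjacent in the Z^l lattice iff their
   Euclidean distance is 1, i.e. the sum of squared coordinate differences is 1. *)
Definition lattice_adj (l : nat) (a b : 'rV[int]_l) : bool :=
  (\sum_(i < l) (a 0 i - b 0 i) ^+ 2) == 1.

Section IndComplex.
Variables (F : fieldType) (T : finType) (e : rel T).

(* Faces of ind(G): independent sets of G (the empty set included). *)
Definition independent (A : {set T}) : bool :=
  [forall x in A, forall y in A, ~~ e x y].

(* A is a face of dimension k (i.e. with k+1 vertices); the empty face has dimension -1. *)
Definition face_dim (k : int) (A : {set T}) : bool :=
  independent A && (#|A|%:Z == k + 1).

Definition chain (k : int) (f : {ffun {set T} -> F}) : Prop :=
  forall A, ~~ face_dim k A -> f A = 0.

(* Orientation sign given by the fixed total order enum_rank on vertices: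
   the coefficient of A in the boundary of A ∪ {v} is (-1)^#{u in A | u < v}. *)
Definition bsign (A : {set T}) (v : T) : F :=
  (-1) ^+ #|[set u in A | (enum_rank u < enum_rank v)%N]|.

(* Augmented simplicial boundary map:
   d [v_0 < ... < v_n] = sum_i (-1)^i [v_0 .. ^v_i .. v_n],  d [v] = [emptyset]. *)
Definition boundary (f : {ffun {set T} -> F}) : {ffun {set T} -> F} :=
  [ffun A => \sum_(v in ~: A) bsign A v * f (v |: A)].

Definition reduced_homology_vanishes (k : int) : Prop :=
  forall z, chain k z -> boundary z = 0 ->
    exists c, chain (k + 1) c /\ boundary c = z.

End IndComplex.

(* Main.v *)
Require Import Defs.
From HB Require Import structures.
From mathcomp Require Import all_boot all_order all_algebra.
From mathcomp Require Import zify.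
Import Order.TTheory GRing.Theory Num.Theory.
Local Open Scope ring_scope.

Set Implicit Arguments. Unset Strict Implicit. Unset Printing Implicit Defensive.


Section Chains.
Variables (F : fieldType) (T : finType) (e : rel T).

Local Notation bs := (@bsign F T).
Local Notation bd := (@boundary F T).

Lemma bsign2 A v : bs A v * bs A v = 1.
Proof. by rewrite /bsign -exprD -signr_odd oddD addbb. Qed.

Lemma bsign_neq0 A v : bs A v != 0.
Proof. by rewrite /bsign signr_eq0. Qed.

Lemma bsignU (w : T) (B : {set T}) (v : T) : w \notin B -> v != w ->
  bs (w |: B) v = (if (enum_rank w < enum_rank v)%N then -1 else 1) * bs B v.
Proof.
move=> wB vw; rewrite /bsign.
have -> : [set u in w |: B | (enum_rank u < enum_rank v)%N] =
  if (enum_rank w < enum_rank v)%N then w |: [set u in B | (enum_rank u < enum_rank v)%N]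
  else [set u in B | (enum_rank u < enum_rank v)%N].
  case: ifP => h; apply/setP=> x; rewrite !inE;
  case: (eqVneq x w) => [->|xw] /=; rewrite ?h ?(negbTE wB) //.
case: ifP => _; last by rewrite mul1r.
rewrite cardsU1 inE (negbTE wB) /= exprS.
by [].
Qed.

Lemma bsign_swap (w : T) (B : {set T}) (v : T) : w \notin B -> v \notin B -> v != w ->
  bs (w |: B) v * bs (v |: B) w = - (bs B v * bs B w).
Proof.
move=> wB vB vw; rewrite bsignU // bsignU // 1?eq_sym //.
have hne : enum_rank w != enum_rank v by rewrite (inj_eq enum_rank_inj) eq_sym.
case: (ltngtP (enum_rank w) (enum_rank v)) => h.
- by rewrite mulN1r mul1r mulNr mulrC.
- by rewrite mulN1r mul1r mulrN mulrC.
- by move/val_inj: h => h; rewrite h eqxx in hne.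
Qed.

Lemma boundaryD f g : bd (f + g) = bd f + bd g.
Proof. by apply/ffunP=> A; rewrite !ffunE -big_split; apply: eq_bigr => v _; rewrite ffunE mulrDr. Qed.
Lemma boundaryN f : bd (- f) = - bd f.
Proof. by apply/ffunP=> A; rewrite !ffunE -sumrN; apply: eq_bigr => v _; rewrite ffunE mulrN. Qed.
Lemma boundaryB f g : bd (f - g) = bd f - bd g.
Proof. by rewrite boundaryD boundaryN. Qed.
Lemma boundary0 : bd 0 = 0.
Proof. by apply/ffunP=> A; rewrite !ffunE big1 // => v _; rewrite ffunE mulr0. Qed.

Definition cw (w : T) (c : {ffun {set T} -> F}) : {ffun {set T} -> F} :=
  [ffun A : {set T} => if w \in A then bs (A :\ w) w * c (A :\ w) else 0].
Definition restr0 (w : T) (z : {ffun {set T} -> F}) : {ffun {set T} -> F} :=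
  [ffun A : {set T} => if w \in A then 0 else z A].
Definition ylink (w : T) (z : {ffun {set T} -> F}) : {ffun {set T} -> F} :=
  [ffun B : {set T} => if w \in B then 0 else bs B w * z (w |: B)].

Lemma boundary_cw (w : T) (c : {ffun {set T} -> F}) : (forall A : {set T}, w \in A -> c A = 0) ->
  bd (cw w c) = c - cw w (bd c).
Proof.
move=> cA; apply/ffunP=> A; rewrite !ffunE.
case: (boolP (w \in A)) => wA.
- rewrite cA // sub0r.
  set B := A :\ w.
  have AB : A = w |: B by rewrite setD1K.
  have wB : w \notin B by rewrite !inE eqxx.
  rewrite -mulrN -sumrN (big_mkcond (fun v => v \in ~: A)) (big_mkcond (fun v => v \in ~: B)).
  rewrite mulr_sumr; apply: eq_bigr => v _.
  rewrite !inE.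
  case: (eqVneq v w) => [->|vw] /=; first by rewrite wA /= cA ?setU11 // !mulr0 oppr0 mulr0.
  case: (boolP (v \in A)) => vA /=; first by rewrite mulr0.
  have vB : v \notin B by rewrite !inE negb_and vA orbT.
  rewrite ffunE !inE wA orbT.
  have -> : (v |: A) :\ w = v |: B.
    by rewrite [in LHS]AB setUCA setU1K // in_setU1 negb_or eq_sym vw.
  rewrite mulrA mulrN mulrA -mulNr; congr (_ * _).
  by rewrite [in LHS]AB bsign_swap // mulrC.
- rewrite (bigD1 w) /=; last by rewrite inE.
  rewrite big1 ?addr0.
    rewrite !ffunE setU11 setU1K // mulrA bsign2 mul1r.
    by rewrite subr0.
  move=> v vw; rewrite !ffunE !inE (negbTE wA) orbF eq_sym.
  by case/andP: vw => _ /negbTE ->; rewrite mulr0.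
Qed.

Lemma z_split (w : T) (z : {ffun {set T} -> F}) : z = restr0 w z + cw w (ylink w z).
Proof.
apply/ffunP=> A; rewrite !ffunE; case: ifP => wA; last by rewrite addr0.
rewrite add0r !inE eqxx /= setD1K // mulrA bsign2 mul1r //.
Qed.

Lemma cycle_split (w : T) (z : {ffun {set T} -> F}) : bd z = 0 ->
  bd (ylink w z) = 0 /\ bd (restr0 w z) = - ylink w z.
Proof.
move=> bz.
have y0 : forall A : {set T}, w \in A -> ylink w z A = 0 by move=> A wA; rewrite ffunE wA.
have E : bd (restr0 w z) + (ylink w z - cw w (bd (ylink w z))) = 0.
  by rewrite -boundary_cw // -boundaryD -z_split.
have by0 : bd (ylink w z) = 0.
  apply/ffunP=> B; rewrite [RHS]ffunE.
  case: (boolP (w \in B)) => wB.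
    by rewrite ffunE big1 // => v _; rewrite y0 ?mulr0 // in_setU1 wB orbT.
  have := congr1 (fun f : {ffun {set T} -> F} => f (w |: B)) E.
  rewrite !ffunE setU11 setU1K //.
  rewrite big1; last by move=> v _; rewrite ffunE (setU1r v (setU11 w B)) mulr0.
  rewrite add0r sub0r => /eqP; rewrite oppr_eq0 mulf_eq0 (negbTE (bsign_neq0 _ _)) /=.
  by move/eqP.
split=> //.
move: E; rewrite by0.
have -> : cw w 0 = 0 by apply/ffunP=> A; rewrite !ffunE; case: ifP; rewrite ?ffunE ?mulr0.
by rewrite subr0 => /eqP; rewrite addr_eq0 => /eqP.
Qed.


Definition wchain (W : {set T}) (k : int) (f : {ffun {set T} -> F}) : Prop :=
  forall A, ~~ (face_dim e k A && (A \subset W)) -> f A = 0.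

Definition hv (W : {set T}) (k : int) : Prop :=
  forall z, wchain W k z -> bd z = 0 -> exists c, wchain W (k + 1) c /\ bd c = z.

Lemma wchainP {W : {set T}} {k : int} {f : {ffun {set T} -> F}} {A : {set T}} : wchain W k f -> f A != 0 -> face_dim e k A /\ A \subset W.
Proof.
move=> h fA; case: (boolP (face_dim e k A && (A \subset W))) => [/andP[] //|H].
by rewrite h ?eqxx in fA.
Qed.

Lemma wchain_sub (W W' : {set T}) (k : int) (f : {ffun {set T} -> F}) : W \subset W' -> wchain W k f -> wchain W' k f.
Proof.
move=> sW h A; apply: contraNeq => /(wchainP h) [fA AW].
by rewrite fA (subset_trans AW sW).
Qed.

Lemma wchainD (W : {set T}) (k : int) (f g : {ffun {set T} -> F}) : wchain W k f -> wchain W k g -> wchain W k (f + g).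
Proof. by move=> hf hg A H; rewrite ffunE hf // hg // addr0. Qed.

Lemma wchainN (W : {set T}) (k : int) (f : {ffun {set T} -> F}) : wchain W k f -> wchain W k (- f).
Proof. by move=> hf A H; rewrite ffunE hf // oppr0. Qed.

Lemma indep_sub (A B : {set T}) : A \subset B -> independent e B -> independent e A.
Proof.
move=> AB /forall_inP hB; apply/forall_inP => x xA; apply/forall_inP => y yA.
by have /forall_inP := hB x (subsetP AB x xA); apply; apply: (subsetP AB).
Qed.

Lemma wchain_restr0 (W : {set T}) (k : int) (w : T) (z : {ffun {set T} -> F}) : wchain W k z -> wchain (W :\ w) k (restr0 w z).
Proof.
move=> hz A; apply: contraNeq; rewrite ffunE; case: ifP => wA; first by rewrite eqxx.
move/(wchainP hz) => [fA AW].
rewrite fA /=; apply/subsetP => x xA; rewrite !inE (subsetP AW) // andbT.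
by apply: contraFN wA => /eqP <-.
Qed.

Definition nbh (w : T) : {set T} := w |: [set x | e w x || e x w].

Lemma wchain_ylink (W : {set T}) (k : int) (w : T) (z : {ffun {set T} -> F}) : wchain W k z -> wchain (W :\: nbh w) (k - 1) (ylink w z).
Proof.
move=> hz B; apply: contraNeq; rewrite ffunE; case: ifP => wB; first by rewrite eqxx.
rewrite mulf_eq0 negb_or => /andP[_] /(wchainP hz) [/andP[ind sz] sW].
have indB : independent e B by apply: indep_sub ind; apply: subsetUr.
rewrite /face_dim indB /=; apply/andP; split.
  move: sz; rewrite cardsU1 wB /= => /eqP sz; apply/eqP; lia.
apply/subsetP => x xB; rewrite !inE (subsetP sW) ?andbT; last by rewrite !inE xB orbT.
have xw : x != w by apply: contraFN wB => /eqP <-.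
rewrite (negbTE xw) /=.
move/forall_inP: ind => ind.
have h1 := ind w (setU11 _ _); have h2 := ind x (setU1r _ xB).
move/forall_inP: h1 => /(_ x (setU1r _ xB)) /negbTE -> .
by move/forall_inP: h2 => /(_ w (setU11 _ _)) /negbTE ->.
Qed.

Lemma wchain_cw (W V : {set T}) (k : int) (w : T) (c : {ffun {set T} -> F}) : w \in W -> ~~ e w w -> V \subset W ->
  (forall x, x \in V -> ~~ e w x && ~~ e x w) -> w \notin V ->
  wchain V k c -> wchain W (k + 1) (cw w c).
Proof.
move=> wW ww VW Vx wV hc A; apply: contraNeq; rewrite ffunE; case: ifP => wA; last by rewrite eqxx.
rewrite mulf_eq0 negb_or => /andP[_] /(wchainP hc) [/andP[ind sz] sV].
set B := A :\ w in ind sz sV.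
have AB : A = w |: B by rewrite setD1K.
have wB : w \notin B by rewrite !inE eqxx.
rewrite /face_dim; apply/andP; split; first apply/andP; first split.
- rewrite AB; apply/forall_inP => x; rewrite in_setU1 => /orP[/eqP ->|xB];
  apply/forall_inP => y; rewrite in_setU1 => /orP[/eqP ->|yB] //.
  + by case/andP: (Vx y (subsetP sV y yB)).
  + by case/andP: (Vx x (subsetP sV x xB)).
  + by move/forall_inP: ind => /(_ x xB) /forall_inP /(_ y yB).
- rewrite AB cardsU1 wB /=; move: sz => /eqP sz; apply/eqP; lia.
- by rewrite AB; apply/subsetP => x; rewrite in_setU1 => /orP[/eqP ->|xB] //;
  apply: (subsetP VW); apply: (subsetP sV).
Qed.

Lemma decomp (W : {set T}) (k : int) (w : T) : w \in W -> ~~ e w w ->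
  hv (W :\ w) k -> hv (W :\: nbh w) (k - 1) -> hv W k.
Proof.
move=> wW ww h1 h2 z hz bz.
have [by0 bz0] := cycle_split w bz.
have [c1 [hc1 bc1]] := h2 _ (wchain_ylink hz) by0.
rewrite subrK in hc1.
have c1w : forall A : {set T}, w \in A -> c1 A = 0.
  move=> A wA; apply/eqP; apply: contraT => /(wchainP hc1) [_ /subsetP sA].
  by have := sA w wA; rewrite !inE eqxx.
have hz' : wchain (W :\ w) k (restr0 w z + c1).
  apply: wchainD; first exact: wchain_restr0.
  apply: wchain_sub hc1; apply/subsetP => x; rewrite !inE negb_or => /andP[/andP[-> _] ->].
  by rewrite andbT.
have bz' : bd (restr0 w z + c1) = 0 by rewrite boundaryD bz0 bc1 addNr.
have [c2 [hc2 bc2]] := h1 _ hz' bz'.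
exists (c2 - cw w c1); split.
  apply: wchainD; first by apply: wchain_sub hc2; apply: subsetDl.
  apply: wchainN; apply: (wchain_cw (V := W :\: nbh w)) => //.
  - exact: subsetDl.
  - move=> x; rewrite !inE negb_or => /andP[/andP[_ /norP[-> ->]] _] //.
  - by rewrite !inE eqxx.
rewrite boundaryB bc2 boundary_cw // bc1 opprB -addrA [c1 + _]addrC subrK.
by rewrite [RHS](z_split w).
Qed.

Lemma cone (W : {set T}) (u : T) : u \in W -> ~~ e u u ->
  (forall x, x \in W -> ~~ e u x && ~~ e x u) -> forall k, hv W k.
Proof.
move=> uW uu nx k z hz bz.
have [by0 bz0] := cycle_split u bz.
exists (cw u (restr0 u z)); split.
  apply: (wchain_cw (V := W :\ u)) => //.
  - exact: subsetDl.
  - by move=> x; rewrite !inE => /andP[_]; apply: nx.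
  - by rewrite !inE eqxx.
  - exact: wchain_restr0.
rewrite boundary_cw; last by move=> A uA; rewrite ffunE uA.
rewrite bz0 [RHS](z_split u); congr (_ + _).
apply/ffunP => A; rewrite !ffunE; case: ifP => _; last by rewrite oppr0. set X := (if _ then _ else _). rewrite mulrN opprK. done.
Qed.

End Chains.


Section Lattice.
Variable l : nat.
Implicit Types (a b : 'rV[int]_l).

Definition shift a (i : 'I_l) (s : int) : 'rV[int]_l :=
  \row_j (a 0 j + (if j == i then s else 0)).
Definition sgn (b : bool) : int := if b then 1 else -1.
Definition dir a b : option ('I_l * bool) :=
  [pick ij : 'I_l * bool | b == shift a ij.1 (sgn ij.2)].
Definition phi a : int := \sum_(i < l) (l - i)%:Z * a 0 i.

Lemma adj_unit a b : lattice_adj a b -> exists i s, b = shift a i (sgn s).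
Proof.
rewrite /lattice_adj => /eqP H.
set d := fun j => a 0 j - b 0 j.
case: (pickP (fun j => d j != 0)) => [i di|d0]; last first.
  move: H; rewrite big1 // => j _.
  by have := d0 j => /negbFE/eqP; rewrite /d => ->; rewrite expr0n.
move: H; rewrite (bigD1 i) //=.
set r := \sum_(j < l | j != i) _ => H.
have r0 : 0 <= r by apply: sumr_ge0 => j _; exact: sqr_ge0.
have di1 : 1 <= (a 0 i - b 0 i) ^+ 2.
  rewrite expr2; move: di; rewrite /d; set x := (a 0 i - b 0 i) => dx; nia.
have rz : r = 0 by lia.
have dj0 : forall j, j != i -> a 0 j - b 0 j = 0.
  move=> j ji; move/eqP: rz; rewrite psumr_eq0; last by move=> k _; exact: sqr_ge0.
  by move/allP => /(_ j (mem_index_enum _)); rewrite ji /= sqrf_eq0 => /eqP.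
have : (a 0 i - b 0 i) ^+ 2 = 1 by lia.
rewrite expr2; set x := (a 0 i - b 0 i) => x2.
have : (x == 1) || (x == -1) by nia.
case/orP=> /eqP hx.
- exists i, false; apply/rowP => j; rewrite mxE /sgn.
  case: (eqVneq j i) => [->|ji]; first by move: hx; rewrite /x; lia.
  by have := dj0 j ji; lia.
- exists i, true; apply/rowP => j; rewrite mxE /sgn.
  case: (eqVneq j i) => [->|ji]; first by move: hx; rewrite /x; lia.
  by have := dj0 j ji; lia.
Qed.

Lemma adj_irr a : ~~ lattice_adj a a.
Proof. by rewrite /lattice_adj big1 // => j _; rewrite subrr expr0n. Qed.

Lemma shift_inj a i j s t : shift a i (sgn s) = shift a j (sgn t) -> i = j /\ s = t.
Proof.
move/rowP => H.
have := H i; rewrite !mxE eqxx.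
case: (eqVneq i j) => [<-|ij] /=.
  by move=> h; split => //; move: h; clear H; case: s; case: t; rewrite /sgn; lia.
by clear H; case: s; rewrite /sgn; lia.
Qed.

Lemma shift_neq a i s : shift a i (sgn s) != a.
Proof.
apply/eqP => /rowP /(_ i); rewrite mxE eqxx; set x := a 0 i; rewrite -[in RHS](addr0 x) => /addrI; by case: s => /eqP; rewrite /sgn ?oppr_eq0 oner_eq0.
Qed.

Lemma dir_some a b ij : dir a b = Some ij -> b = shift a ij.1 (sgn ij.2).
Proof. by rewrite /dir; case: pickP => // x /eqP h [<-]. Qed.

Lemma dir_adj a b : lattice_adj a b -> exists ij, dir a b = Some ij.
Proof.
move/adj_unit => [i [s hb]]; rewrite /dir; case: pickP => [x _|h]; first by exists x.
by have := h (i, s); rewrite /= hb eqxx.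
Qed.

Lemma dir_self a : dir a a = None.
Proof.
rewrite /dir; case: pickP => // x /eqP h.
by have := shift_neq a x.1 x.2; rewrite -h eqxx.
Qed.

Lemma phi_shift a i s : phi (shift a i s) = phi a + (l - i)%:Z * s.
Proof.
have Hs : \sum_(j < l) (l - j)%:Z * (if j == i then s else 0) = (l - i)%:Z * s.
  rewrite (bigD1 i) //= eqxx big1 ?addr0 //; move=> j /negbTE -> /=; by rewrite mulr0.
rewrite /phi -Hs -big_split /=.
by apply: eq_bigr => j _; rewrite mxE mulrDr.
Qed.

End Lattice.


Section Main.
Variables (F : fieldType) (l : nat) (T : finType) (p : T -> 'rV[int]_l) (e : rel T).
Hypotheses (l0 : (0 < l)%N) (pinj : injective p) (esymm : symmetric e)
  (eadj : forall x y, e x y -> lattice_adj (p x) (p y)).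

Lemma e_irr x : ~~ e x x.
Proof. by apply/negP => /eadj; apply/negP; apply: adj_irr. Qed.

Lemma hv_small (W : {set T}) (k : int) : k + 1 < 0 -> hv F e W k.
Proof.
move=> kn z hz bz; exists 0; split; first by move=> A _; rewrite ffunE.
rewrite boundary0; apply/ffunP => A; rewrite ffunE; symmetry; apply: hz.
by rewrite /face_dim; apply/negP => /andP[/andP[_ /eqP h] _]; lia.
Qed.

Lemma step (k : int) (k1 : -1 <= k)
  (IH : forall W : {set T}, (k - 1 + 1) * (2 * l + 1)%N%:Z < #|W|%:Z -> hv F e W (k - 1))
  (W : {set T}) : (k + 1) * (2 * l + 1)%N%:Z < #|W|%:Z -> hv F e W k.
Proof.
move=> Wk.
have [u0 u0W] : exists u0, u0 \in W.
  apply/set0Pn; rewrite -card_gt0; nia.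
have [u uW umax] : exists2 u, u \in W & forall x, x \in W -> phi (p x) <= phi (p u).
  by case: (arg_maxP (fun x => phi (p x)) u0W) => u uW h; exists u => // x /h.
have nobig : forall x, x \in W -> phi (p u) < phi (p x) -> False.
  by move=> x xW; rewrite ltNge umax.
pose R (t : nat) := [set x in W | e u x &&
  [exists j : 'I_l, (j < t)%N && (p x == shift (p u) j (-1))]].
have Rsub : forall t, R t \subset W by move=> t; apply/subsetP => x; rewrite inE => /andP[].
have main : forall d t, (t + d)%N = l -> hv F e (W :\: R t) k.
  elim=> [|d IHd] t tl.
  - rewrite addn0 in tl; subst t.
    apply: (cone (u := u)) => //; first by rewrite !inE uW andbT (negbTE (e_irr u)).
    + by apply: e_irr.
    + move=> x; rewrite !inE => /andP[xR xW]; rewrite [e x u]esymm andbb.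
      apply/negP => eux; move: xR; rewrite xW eux /= => /existsPn nR.
      have [j [s hs]] := adj_unit (eadj eux).
      case: s hs => hs.
        by apply: (nobig x xW); rewrite hs phi_shift /sgn mulr1; have := ltn_ord j; lia.
      by have := nR j; rewrite ltn_ord hs eqxx.
  - have tl' : (t < l)%N by lia.
    have IH1 := IHd t.+1 ltac:(lia).
    pose i := Ordinal tl'.
    case: (pickP (fun x => (x \in W) && e u x && (p x == shift (p u) i (-1)))) => [w hw|none].
    + case/andP: hw => /andP[wW euw] /eqP pw.
      have wR : w \notin R t.
        rewrite inE; apply/negP => /andP[_ /andP[_ /existsP [j /andP[jt /eqP hj]]]].
        move: hj; rewrite pw => hj.
        have [ij _] := shift_inj (s := false) (t := false) hj.
        by move: jt; rewrite -ij /= ltnn.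
      have RS : R t.+1 = w |: R t.
        apply/setP => x; rewrite in_setU1 !inE.
        case: (eqVneq x w) => [->|xw] /=.
          by rewrite wW euw /=; apply/existsP; exists i; rewrite /= ltnSn pw eqxx.
        case: (x \in W) => //=; case: (e u x) => //=.
        apply/existsP/existsP => [[j /andP[jt /eqP hj]]|[j /andP[jt hj]]]; exists j; last first.
          by rewrite hj andbT; apply: ltnW.
        rewrite hj eqxx andbT.
        move: jt; rewrite ltnS leq_eqVlt => /orP[/eqP jt|//].
        have ji : j = i by apply: val_inj.
        by move: xw; rewrite -(inj_eq pinj) hj pw ji eqxx.
      have Req : W :\: R t.+1 = (W :\: R t) :\ w by rewrite RS setDDl setUC.
      apply: (decomp (w := w)).
      * by rewrite in_setD wR wW.
      * exact: e_irr.
      * by rewrite -Req.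
      * apply: IH.
        rewrite setDDl cardsD.
        set X := R t :|: nbh e w.
        pose code x := if x \in R t then
            (if dir (p u) (p x) is Some ij then Some (ij.1, true) else None)
          else dir (p w) (p x).
        have FR : forall x, x \in R t -> exists j : 'I_l,
            [/\ (j < t)%N, p x = shift (p u) j (-1) & code x = Some (j, true)].
          move=> x xR; have := xR; rewrite inE => /andP[xW /andP[eux /existsP[j /andP[jt /eqP hj]]]].
          exists j; split => //; rewrite /code xR.
          have [[j' b] hd] := dir_adj (eadj eux).
          rewrite hd; have := dir_some hd; rewrite hj /= => hh.
          by have [-> _] := shift_inj (s := false) hh.
        have FN : forall x, x \in W :&: X -> x \notin R t -> x = w \/ e w x.
          move=> x /setIP[_]; rewrite /X in_setU => /orP[->//|]; rewrite /nbh !inE.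
          case/orP => [/eqP -> | /orP[h|h]] _; [by left|by right|by right; rewrite esymm].
        have inj : {in W :&: X &, injective code}.
          move=> x y xS yS.
          have xW : x \in W by case/setIP: xS.
          have yW : y \in W by case/setIP: yS.
          have cross : forall a b, a \in R t -> b \in W -> b \notin R t -> code a = code b -> False.
            move=> a b aR bW bR; have [ja [jt ha ca]] := FR a aR.
            rewrite ca /code (negbTE bR) => /esym hd.
            have := dir_some hd; rewrite /= => hb.
            apply: (nobig b bW); rewrite hb phi_shift pw phi_shift /sgn /= mulr1.
            have := ltn_ord ja; lia.
          case: (boolP (x \in R t)) => xR; case: (boolP (y \in R t)) => yR.
          - have [jx [_ hx cx]] := FR x xR; have [jy [_ hy cy]] := FR y yR.
            by rewrite cx cy => -[ej]; apply: pinj; rewrite hx hy ej.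
          - by move=> /(cross _ _ xR yW yR).
          - by move=> /esym /(cross _ _ yR xW xR).
          - rewrite /code (negbTE xR) (negbTE yR).
            case hdx: (dir (p w) (p x)) => [ij|] hdy.
              apply: pinj; rewrite (dir_some hdx).
              by rewrite (dir_some (esym hdy)).
            have isw : forall z, z \in W :&: X -> z \notin R t -> None = dir (p w) (p z) -> z = w.
              move=> z zS zR hz; case: (FN z zS zR) => // ewz.
              by have [ij hd] := dir_adj (eadj ewz); rewrite hd in hz.
            by rewrite (isw x xS xR (esym hdx)) (isw y yS yR hdy).
        have sL : (#|W :&: X| <= 2 * l + 1)%N.
          rewrite -(card_in_imset inj); apply: leq_trans (max_card _) _.
          by rewrite card_option card_prod card_ord card_bool; lia.
        have sW : (#|W :&: X| <= #|W|)%N by apply: subset_leq_card; apply: subsetIl.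
        move: Wk sL sW; set n := #|W|; set m := #|W :&: X|; move=> *; nia.
    + have RS : R t.+1 = R t.
        apply/setP => x; rewrite !inE.
        case: (boolP (x \in W)) => xW //=; case: (boolP (e u x)) => eux //=.
        apply/existsP/existsP => [[j /andP[jt /eqP hj]]|[j /andP[jt hj]]]; exists j; last first.
          by rewrite hj andbT; apply: ltnW.
        rewrite hj eqxx andbT.
        move: jt; rewrite ltnS leq_eqVlt => /orP[/eqP jt|//].
        have ji : j = i by apply: val_inj.
        by have := none x; rewrite xW eux hj ji eqxx.
      by rewrite -RS.
have := main l 0%N (add0n _).
have -> : R 0%N = set0.
  by apply/setP => x; rewrite !inE; case: (x \in W) => //=; case: (e u x) => //=; apply/existsPn.
by rewrite setD0.
Qed.


Lemma all_k (m : nat) : forall (k : int), k <= m%:Z - 2 -> forall W : {set T},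
  (k + 1) * (2 * l + 1)%N%:Z < #|W|%:Z -> hv F e W k.
Proof.
elim: m => [|m IHm] k km W hW; first by apply: hv_small; lia.
case: (boolP (k + 1 < 0)) => [kn|]; first exact: hv_small.
rewrite -leNgt => k0.
apply: step => //; first lia.
by move=> W' hW'; apply: IHm => //; lia.
Qed.

End Main.

Unset Implicit Arguments. Set Strict Implicit.

(* G: vertex set T (finite), embedded injectively into Z^l by p;
   edge relation e: symmetric, and every edge is a lattice edge. *)
Theorem corollary6p14 (F : fieldType) (l : nat) (T : finType)
    (p : T -> 'rV[int]_l) (e : rel T) :
  (0 < l)%N ->
  injective p ->
  symmetric e ->
  (forall x y, e x y -> lattice_adj (p x) (p y)) ->
  forall k : int,
    (k%:~R : rat) < (#|T|%:R / (2 * l + 1)%:R) - 1 ->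
    reduced_homology_vanishes F e k.
Proof.
move=> l0 pinj es eadj k hk.
have hk' : (k + 1) * (2 * l + 1)%N%:Z < #|[set: T]|%:Z.
  rewrite cardsT -(ltr_int rat) intrM intrD.
  move: hk; rewrite ltrBrDr ltr_pdivlMr ?ltr0n ?addn1 //.
have [m hm] : exists m : nat, k <= m%:Z - 2 by exists (absz k).+2; lia.
have H := @all_k F l T p e l0 pinj es eadj m k hm [set: T] hk'.
move=> z hz bz.
have hz' : wchain e [set: T] k z by move=> A; rewrite subsetT andbT; exact: hz.
have [c [hc bc]] := H z hz' bz.
exists c; split => // A hA; apply: hc; by rewrite subsetT andbT.
Qed.
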